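(* For all integers $m \geq 3$ and $k$ with $2 \leq k \leq m-1$, $$\mathbb{P}_{X \sim B(m,\frac{k}{m})}\big[X \leq k\big] \leq 0.7152.$$
   Context: $B(m,p)$ denotes the binomial distribution with $m$ trials and success probability $p$: $\mathbb{P}[X=j]=\binom{m}{j}p^j(1-p)^{m-j}$ for $j=0,\dots,m$. *)

(* Defs.v *)
From HB Require Import structures.
From mathcomp Require Import all_boot all_order all_algebra.
Set Implicit Arguments. Unset Strict Implicit. Unset Printing Implicit Defensive.
Import Order.TTheory GRing.Theory Num.Theory.
Local Open Scope ring_scope.

Definition binom_pmf (m : nat) (p : rat) (j : nat) : rat :=
  ('C(m, j))%:R * p ^+ j * (1 - p) ^+ (m - j).

Definition binom_cdf (m : nat) (p : rat) (k : nat) : rat :=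
  \sum_(0 <= j < k.+1) binom_pmf m p j.

(* Main.v *)
From HB Require Import structures.
From mathcomp Require Import all_boot all_order all_algebra.
From mathcomp Require Import ring lra zify.
From mathcomp.real_closed Require Import polyrcf realalg.
Require Import Defs.
Set Implicit Arguments. Unset Strict Implicit. Unset Printing Implicit Defensive.
Import Order.TTheory GRing.Theory Num.Theory.
Local Open Scope ring_scope.
Lemma amgm2 (R : realFieldType) (a b : R) (k M : nat) : 0 <= a -> 0 <= b ->
  a ^+ k * b ^+ M <= ((k%:R * a + M%:R * b) / (k + M)%:R) ^+ (k + M).
Proof.
move=> a0 b0.
pose E := fun i : 'I_(k+M) => if (i < k)%N then a else b.
have := @leif_AGM R _ predT E.
rewrite cardT size_enum_ord /=.
have -> : \prod_(i in predT) E i = a ^+ k * b ^+ M.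
  rewrite big_split_ord /=.
  rewrite (eq_bigr (fun _ => a)); last by move=> i _; rewrite /E /= ltn_ord.
  rewrite [X in _ * X](eq_bigr (fun _ => b)); last by move=> i _; rewrite /E /= ltnNge leq_addr.
  by rewrite !prodr_const !card_ord.
have -> : \sum_(i in predT) E i = k%:R * a + M%:R * b.
  rewrite big_split_ord /=.
  rewrite (eq_bigr (fun _ => a)); last by move=> i _; rewrite /E /= ltn_ord.
  rewrite [X in _ + X](eq_bigr (fun _ => b)); last by move=> i _; rewrite /E /= ltnNge leq_addr.
  by rewrite !sumr_const !card_ord !mulr_natl.
move=> H; apply: leif_le (H _) => i _; by rewrite /E; case: ifP.
Qed.

Lemma bp_max (R : realFieldType) k M (t : R) : (0 < k)%N -> (0 < M)%N -> 0 <= t -> t <= 1 ->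
  t ^+ k * (1 - t) ^+ M <= (k%:R / (k+M)%:R) ^+ k * (M%:R / (k+M)%:R) ^+ M.
Proof.
move=> k0 M0 t0 t1.
have kn : (k%:R : R) != 0 by rewrite pnatr_eq0 -lt0n.
have Mn : (M%:R : R) != 0 by rewrite pnatr_eq0 -lt0n.
have mn : ((k+M)%:R : R) != 0 by rewrite pnatr_eq0 addn_eq0 negb_and -!lt0n k0.
have := @amgm2 R (t / k%:R) ((1-t)/M%:R) k M (divr_ge0 t0 (ler0n _ _))
  (divr_ge0 (ltac:(by rewrite subr_ge0) : 0 <= 1 - t) (ler0n _ _)).
have -> : k%:R * (t / k%:R) + M%:R * ((1 - t) / M%:R) = 1 :> R.
  rewrite mulrCA mulfV // mulrCA mulfV // !mulr1; ring.
move=> H.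
have kp : (0 : R) < k%:R ^+ k * M%:R ^+ M by rewrite mulr_gt0 // exprn_gt0 // ltr0n.
have := ler_wpM2r (ltW kp) H.
rewrite !expr_div_n exprD.
have -> : t ^+ k / k%:R ^+ k * ((1 - t) ^+ M / M%:R ^+ M) * (k%:R ^+ k * M%:R ^+ M)
   = t ^+ k * (1 - t) ^+ M.
  by field; rewrite !expf_neq0.
move=> H2; apply: (le_trans H2); rewrite !expr1n exprD; rewrite le_eqVlt; apply/orP; left; apply/eqP; field.
by rewrite !expf_neq0.
Qed.
Section G.
Variable R : comNzRingType.
Definition bp n (p : R) j := ('C(n, j))%:R * p ^+ j * (1 - p) ^+ (n - j).
Definition bc n (p : R) k := \sum_(0 <= j < k.+1) bp n p j.

Lemma bp_rec n (p : R) k : (k < n)%N ->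
  bp n.+1 p k.+1 = (1 - p) * bp n p k.+1 + p * bp n p k.
Proof.
move=> kn; rewrite /bp binS natrD subSS.
have -> : (n - k = (n - k.+1).+1)%N by rewrite subnSK.
rewrite !exprS; ring.
Qed.

Lemma bc_rec n (p : R) k : (k <= n)%N -> bc n.+1 p k = bc n p k - p * bp n p k.
Proof.
elim: k => [|k IH] kn.
  rewrite /bc !big_nat1 /bp !bin0 !subn0 exprS; ring.
rewrite /bc big_nat_recr //= -/(bc n.+1 p k) IH ?(ltnW kn) // bp_rec //.
rewrite big_nat_recr //= -/(bc n p k); ring.
Qed.

Definition bpol n j : {poly R} := ('C(n, j))%:R *: ('X^j * (1 - 'X) ^+ (n - j)).
Definition cpol n k := \sum_(0 <= j < k.+1) bpol n j.

Lemma horner_cpol n k x : (cpol n k).[x] = bc n x k.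
Proof.
rewrite /cpol /bc horner_sum; apply: eq_bigr => j _.
by rewrite /bpol /bp hornerZ hornerM hornerXn horner_exp hornerD hornerN hornerX hornerC mulrA.
Qed.


Lemma deriv_bpol0 n : (bpol n.+1 0)^`() = - ((n.+1)%:R *: bpol n 0).
Proof.
have d1 : (1 : {poly R})^`() = 0 by rewrite -polyC1 derivC.
rewrite /bpol !bin0 !scale1r !expr0 !mul1r !subn0 deriv_exp derivB derivX d1 /=.
by rewrite sub0r mulN1r scaler_nat mulNrn.
Qed.

Lemma deriv_bpolS n k : (k < n)%N ->
  (bpol n.+1 k.+1)^`() = (n.+1)%:R *: (bpol n k - bpol n k.+1).
Proof.
move=> kn; rewrite /bpol subSS.
have -> : (n - k = (n - k.+1).+1)%N by rewrite subnSK.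
set e := (n - k.+1)%N.
rewrite derivZ derivM derivXn deriv_exp derivB derivX -polyC1 derivC sub0r /=.
rewrite !polyC1 mulrnAl mulN1r mulrnAr mulrN mulNrn.
set A := 'X^k * _; set B := 'X^(k.+1) * _.
rewrite !scaler_nat mulrnBl mulrnBl -!mulrnA.
have h1 : (k.+1 * 'C(n.+1, k.+1) = 'C(n, k) * n.+1)%N.
  by rewrite -mul_bin_diag mulnC.
have h2 : (e.+1 * 'C(n.+1, k.+1) = 'C(n, k.+1) * n.+1)%N.
  by rewrite mulnC /e subnSK // mulnC -subSS -(mul_bin_down n.+1) mulnC.
by rewrite h1 h2.
Qed.

Lemma deriv_cpol n k : (k <= n)%N -> (cpol n.+1 k)^`() = - ((n.+1)%:R *: bpol n k).
Proof.
elim: k => [|k IH] kn.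
  by rewrite /cpol big_nat1 deriv_bpol0.
rewrite /cpol big_nat_recr //= derivD -/(cpol n.+1 k) IH ?(ltnW kn) // deriv_bpolS //.
by rewrite scalerBr addrA addNr sub0r.
Qed.

Lemma horner_bpol n j x : (bpol n j).[x] = bp n x j.
Proof.
by rewrite /bpol /bp hornerZ hornerM hornerXn horner_exp hornerD hornerN hornerX hornerC mulrA.
Qed.
End G.

Lemma mono_step (R : rcfType) k m : (0 < k)%N -> (k < m)%N ->
  bc m.+1 (k%:R / m.+1%:R : R) k <= bc m (k%:R / m%:R) k.
Proof.
move=> k0 km.
have m0 : (0 < m)%N by apply: leq_ltn_trans km.
have mn : (m%:R : R) != 0 by rewrite pnatr_eq0 -lt0n.
have m1n : (1 + m%:R : R) != 0 by rewrite addrC natr1 pnatr_eq0.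
set q0 : R := k%:R / m%:R; set q1 : R := k%:R / m.+1%:R.
have dq : q0 - q1 = k%:R / (m%:R * m.+1%:R) by rewrite /q0 /q1; field; rewrite m1n mn.
have q10 : q1 < q0 by rewrite -subr_gt0 dq divr_gt0 ?mulr_gt0 ?ltr0n.
have [c ci Hc] := poly_mvt (cpol R m.+1 k) q10.
rewrite deriv_cpol ?(ltnW km) // hornerN hornerZ horner_bpol !horner_cpol in Hc.
move: ci; rewrite in_itv /= => /andP[c1 c2].
have q0le1 : q0 <= 1 by rewrite /q0 ler_pdivrMr ?ltr0n // mul1r ler_nat ltnW.
have q1ge0 : 0 <= q1 by rewrite /q1 divr_ge0 ?ler0n.
have Hb : bp m c k <= bp m q0 k.
  rewrite /bp -!mulrA ler_wpM2l ?ler0n //.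
  have := @bp_max R k (m - k) c k0 (ltac:(by rewrite subn_gt0)) (ltW (le_lt_trans q1ge0 c1)) (ltW (lt_le_trans c2 q0le1)).
  rewrite subnKC ?(ltnW km) //.
  have -> : (m - k)%:R / m%:R = 1 - q0 :> R by rewrite /q0 natrB ?(ltnW km) //; field.
  by [].
have Hq : m.+1%:R * (q0 - q1) = q0 by rewrite dq /q0; field; rewrite m1n mn.
have E : bc m.+1 q1 k = bc m.+1 q0 k + m.+1%:R * bp m c k * (q0 - q1).
  have E0 : bc m.+1 q1 k = bc m.+1 q0 k - (bc m.+1 q0 k - bc m.+1 q1 k) by ring.
  by rewrite E0 Hc; ring.
have E2 : m.+1%:R * bp m c k * (q0 - q1) = q0 * bp m c k.
  by rewrite mulrAC Hq.
rewrite E E2 bc_rec ?(ltnW km) //.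
have q0ge0 : 0 <= q0 by rewrite /q0 divr_ge0 ?ler0n.
have H := ler_wpM2l q0ge0 Hb.
lra.
Qed.

Lemma bc_chain (R : rcfType) k n : (0 < k)%N ->
  bc (k.+1 + n) (k%:R / (k.+1 + n)%:R : R) k <= bc k.+1 (k%:R / k.+1%:R) k.
Proof.
move=> k0; elim: n => [|n IH]; first by rewrite addn0.
apply: le_trans IH; rewrite addnS; apply: mono_step => //.
by rewrite addSn ltnS leq_addr.
Qed.

Lemma bc_total (R : comNzRingType) n (p : R) : \sum_(0 <= j < n.+1) bp n p j = 1.
Proof.
have := exprDn (1 - p) p n; rewrite subrK expr1n => ->.
rewrite big_mkord; apply: eq_bigr => i _.
by rewrite /bp -mulrA mulr_natl mulrC.
Qed.

Lemma bc_last (R : comNzRingType) k (p : R) : bc k.+1 p k = 1 - p ^+ k.+1.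
Proof.
rewrite -(bc_total k.+1 p) big_nat_recr //= -/(bc k.+1 p k) /bp subnn binn.
by rewrite expr0 mulr1 mul1r addrK.
Qed.

Lemma bk_step (R : rcfType) k :
  ((k%:R / k.+1%:R) ^+ k.+1 : R) <= (k.+1%:R / k.+2%:R) ^+ k.+2.
Proof.
have k1 : (k.+1%:R : R) != 0 by rewrite pnatr_eq0.
have := @amgm2 R (k%:R / k.+1%:R) 1 k.+1 1 (divr_ge0 (ler0n _ _) (ler0n _ _)) ler01.
rewrite expr1 mulr1 addn1.
have -> : k.+1%:R * (k%:R / k.+1%:R) + 1%:R * 1 = k.+1%:R :> R.
  by rewrite mulrCA mulfV // mulr1 mulr1 natr1.
by [].
Qed.

Lemma bk_ge (R : rcfType) k : (2 <= k)%N ->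
  8%:R / 27%:R <= ((k%:R / k.+1%:R) ^+ k.+1 : R).
Proof.
elim: k => [|k IH] //; rewrite leq_eqVlt => /orP [/eqP <-|k1].
  rewrite le_eqVlt; apply/orP; left; apply/eqP; field.
  by [].
exact: le_trans (IH k1) (bk_step R k).
Qed.

Lemma ratr_bc m (p : rat) k : ratr (binom_cdf m p k) = bc m (ratr p : realalg) k.
Proof.
rewrite /binom_cdf /bc rmorph_sum; apply: eq_bigr => j _.
by rewrite /binom_pmf /bp !rmorphM !rmorphXn rmorphB rmorph1 rmorph_nat.
Qed.

Lemma num_bound : (19%:R / 27%:R : rat) <= 7152%:R / 10000%:R.
Proof. by vm_compute. Qed.

Theorem corollary2 (m k : nat) (hm : (3 <= m)%N) (hk2 : (2 <= k)%N)
    (hkm : (k <= m - 1)%N) :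
  binom_cdf m (k%:R / m%:R) k <= 7152%:R / 10000%:R.
Proof.
apply: le_trans num_bound.
rewrite -(@ler_rat realalg) ratr_bc !fmorph_div !rmorph_nat.
have -> : m = (k.+1 + (m - k.+1))%N by lia.
apply: le_trans (bc_chain _ _ (ltnW hk2)) _.
rewrite bc_last.
have := bk_ge realalg hk2.
set x := (_ ^+ _).
move=> H.
have : 1 - x <= 1 - 8%:R / 27%:R by rewrite lerD2l lerN2.
move/le_trans; apply; rewrite le_eqVlt; apply/orP; left; apply/eqP; field; by rewrite ?pnatr_eq0.
Qed.
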